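(* Let $A$ be the adjacency matrix of a regular network, let $\lambda$ be an eigenvalue of $A$ with $l$-dimensional generalized eigenspace $G_\lambda$ ($l\ge 1$), and for each positive integer $j$ set $N^j=\operatorname{Ker}(A-\lambda I)\cap\operatorname{Im}(A-\lambda I)^{j-1}$. Then for every $1\le k\le l$ and every one-dimensional subspace $J_1$ of $N^k$ which is special in $N^k$, there exists a $k$-dimensional special Jordan subspace to the network (contained in $G_\lambda$) that contains $J_1$.
   Context: A regular network is a finite directed graph on cells $1,\dots,n$ (loops and multiple arrows allowed) in which every cell receives the same number $v$ of arrows (the valency). Its adjacency matrix $A=[a_{ij}]$ has $a_{ij}$ equal to the number of arrows cell $i$ receives from cell $j$; every row sum is $v$. $A$ acts on $\mathbb{C}^n$. A polydiagonal is a subspace of $\mathbb{C}^n$ of the form $\{x : x_i=x_j \text{ for all } (i,j)\in R\}$ for some (possibly empty) set $R$ of index pairs. $F=\{x_1=\cdots=x_n\}$ is the fully synchrony subspace. $P(W)$ is the smallest polydiagonal containing a subspace $W$. For a subspace $E\subseteq\mathbb{C}^n$, a subspace $W\subseteq E$ is special in $E$ if for every subspace $U\subseteq E$ with $\dim U=\dim W$ and $P(U)\subseteq P(W)$ one has $P(U)=P(W)$. The generalized eigenspace of $\lambda$ is $G_\lambda=\operatorname{Ker}(A-\lambda I)^p$ for $p$ large. A Jordan chain of length $k$ for $\lambda$ is a sequence of nonzero vectors $x_1,\dots,x_k$ with $(A-\lambda I)x_1=0$ and $(A-\lambda I)x_i=x_{i-1}$ for $2\le i\le k$; a Jordan subspace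 is the span of a Jordan chain. A Jordan subspace $W$ of a generalized eigenspace $G$ is a special Jordan subspace to the network if for every Jordan subspace $U$ of $G$ with $\dim U=\dim W$ and $P(U)\subseteq P(W)$, either $P(U)=P(W)$ or $U=F$. *)

(* Defs.v *)
(* Vectors of C^n are row vectors 'rV[algC]_n; a subspace is
   the row space of a square matrix 'M[algC]_n (mxalgebra, scope %MS).
   A acts on column vectors; on row vectors x the action is x *m A^T. *)
From HB Require Import structures.
From mathcomp Require Import all_boot all_order all_algebra all_field.
Set Implicit Arguments. Unset Strict Implicit. Unset Printing Implicit Defensive.
Import Order.TTheory GRing.Theory Num.Theory.
Local Open Scope ring_scope.

Definition regular_network (n : nat) (A : 'M[nat]_n) :=
  exists v : nat, forall i : 'I_n, (\sum_(j < n) A i j)%N = v.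

Definition Amx (n : nat) (A : 'M[nat]_n) : 'M[algC]_n := map_mx (fun k => k%:R) A.

(* transpose of (A - lambda I): right multiplication of row vectors *)
Definition Bt (n : nat) (A : 'M[nat]_n) (lam : algC) : 'M[algC]_n :=
  (Amx A - lam%:M)^T.

(* iterated matrix power (without needing a ring structure on 'M_n) *)
Definition powm (n : nat) (M : 'M[algC]_n) (p : nat) : 'M[algC]_n :=
  iter p (fun X => X *m M) 1%:M.

Definition Gsp (n : nat) (A : 'M[nat]_n) (lam : algC) : 'M[algC]_n :=
  kermx (powm (Bt A lam) n).

Definition Nsp (n : nat) (A : 'M[nat]_n) (lam : algC) (j : nat) : 'M[algC]_n :=
  (kermx (Bt A lam) :&: powm (Bt A lam) j.-1)%MS.

Definition Fsp (n : nat) : 'rV[algC]_n := const_mx 1.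

Definition in_polydiag (n : nat) (R : rel 'I_n) (x : 'rV[algC]_n) : Prop :=
  forall i j, R i j -> x 0 i = x 0 j.

(* P(W): the smallest polydiagonal containing W, i.e. the intersection of
   all polydiagonals containing W *)
Definition Pset (n : nat) (W : 'M[algC]_n) (x : 'rV[algC]_n) : Prop :=
  forall R : rel 'I_n,
    (forall w : 'rV[algC]_n, (w <= W)%MS -> in_polydiag R w) -> in_polydiag R x.

Definition Psub (n : nat) (U W : 'M[algC]_n) : Prop :=
  forall x, Pset U x -> Pset W x.

Definition Peq (n : nat) (U W : 'M[algC]_n) : Prop := Psub U W /\ Psub W U.

Definition special_in (n : nat) (E W : 'M[algC]_n) : Prop :=
  forall U : 'M[algC]_n, (U <= E)%MS -> \rank U = \rank W -> Psub U W -> Peq U W.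

(* Jordan chain x_1,...,x_k (indexed 0..k-1) for lambda *)
Definition jordan_chain (n : nat) (A : 'M[nat]_n) (lam : algC) (k : nat)
  (x : nat -> 'rV[algC]_n) : Prop :=
  [/\ (forall i, (i < k)%N -> x i != 0),
      x 0%N *m Bt A lam = 0 &
      (forall i, (i.+1 < k)%N -> x i.+1 *m Bt A lam = x i)].

Definition jordan_subspace (n : nat) (A : 'M[nat]_n) (lam : algC)
  (W : 'M[algC]_n) : Prop :=
  (W <= Gsp A lam)%MS /\
  exists k (x : nat -> 'rV[algC]_n),
    jordan_chain A lam k x /\ (W == \matrix_(i < k) x i)%MS.

Definition special_jordan (n : nat) (A : 'M[nat]_n) (lam : algC)
  (W : 'M[algC]_n) : Prop :=
  jordan_subspace A lam W /\
  forall U : 'M[algC]_n, jordan_subspace A lam U -> \rank U = \rank W ->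
    Psub U W -> Peq U W \/ (U == Fsp n)%MS.

(* Main.v *)
Require Import Defs.
From HB Require Import structures.
From mathcomp Require Import all_boot all_order all_algebra all_field.
From Stdlib Require Import Classical.
From mathcomp Require Import zify ring.
Set Implicit Arguments. Unset Strict Implicit. Unset Printing Implicit Defensive.
Import Order.TTheory GRing.Theory Num.Theory.
Local Open Scope ring_scope.


Lemma powm0 n (M : 'M[algC]_n) : powm M 0 = 1%:M.
Proof. by []. Qed.
Lemma powmS n (M : 'M[algC]_n) p : powm M p.+1 = powm M p *m M.
Proof. by rewrite /powm iterS. Qed.
Lemma powmD n (M : 'M[algC]_n) a b : powm M (a + b) = powm M a *m powm M b.
Proof.
elim: b => [|b IH]; first by rewrite addn0 powm0 mulmx1.
by rewrite addnS !powmS IH mulmxA.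
Qed.
Lemma powm1 n (M : 'M[algC]_n) : powm M 1 = M.
Proof. by rewrite powmS powm0 mul1mx. Qed.
Lemma ker_powm n (M : 'M[algC]_n) (h : 'rV_n) p :
  h *m M = 0 -> (0 < p)%N -> h *m powm M p = 0.
Proof.
move=> hM; case: p => // p _.
by rewrite -[p.+1]add1n powmD powm1 mulmxA hM mul0mx.
Qed.

Definition eqrelP m n (W : 'M[algC]_(m, n)) i j :=
  forall w : 'rV_n, (w <= W)%MS -> w 0 i = w 0 j.
Definition eqrelb m n (W : 'M[algC]_(m, n)) i j := [forall r, W r i == W r j].

Lemma eqrelbP m n (W : 'M[algC]_(m, n)) i j :
  reflect (eqrelP W i j) (eqrelb W i j).
Proof.
apply: (iffP forallP) => [H w /submxP [D ->] | H r].
  rewrite !mxE; apply: eq_bigr => r _; by rewrite (eqP (H r)).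
apply/eqP; have := H _ (row_sub r W); by rewrite !mxE.
Qed.

Lemma eqrelP_eqmx m1 m2 n (U : 'M[algC]_(m1, n)) (V : 'M[algC]_(m2, n)) i j :
  (U :=: V)%MS -> eqrelP U i j -> eqrelP V i j.
Proof. by move=> e H w; rewrite -e; apply: H. Qed.

Lemma PsetE n (W : 'M[algC]_n) x :
  Pset W x <-> forall i j, eqrelP W i j -> x 0 i = x 0 j.
Proof.
split=> [H i j Hij | H R HR i j Rij].
  apply: (H (eqrelb W)); last by apply/eqrelbP.
  by move=> w wW i' j' /eqrelbP; apply.
apply: H => w wW; exact: HR.
Qed.

Lemma PsubE n (U W : 'M[algC]_n) :
  Psub U W <-> forall i j, eqrelP W i j -> eqrelP U i j.
Proof.
split=> [H i j HW w wU | H x].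
  have: Pset U w by apply/PsetE => i' j'; apply.
  by move/H/PsetE; apply.
by rewrite !PsetE => Hx i j /H; apply: Hx.
Qed.

Lemma ex_max_measure (T : Type) (F : T -> Prop) (c : T -> nat) (b : nat) :
  (exists x, F x) -> (forall x, F x -> (c x <= b)%N) ->
  exists x, F x /\ forall y, F y -> (c y <= c x)%N.
Proof.
move=> [x0 Fx0] Hb.
suff: forall d x, F x -> (b - c x <= d)%N ->
  exists x, F x /\ forall y, F y -> (c y <= c x)%N by apply; [apply: Fx0|].
elim=> [|d IH] x Fx Hd.
  exists x; split=> // y Fy; apply: leq_trans (Hb _ Fy) _.
  by rewrite -subn_eq0 -leqn0.
case: (classic (exists y, F y /\ (c x < c y)%N)) => [[y [Fy lt]]|N].
  apply: (IH y Fy); have := Hb _ Fy; lia.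
exists x; split=> // y Fy; rewrite leqNgt; apply/negP => lt; apply: N; by exists y.
Qed.


Lemma eqrelP_rV n (v : 'rV[algC]_n) i j : eqrelP v i j <-> v 0 i = v 0 j.
Proof.
split=> [H | H w /submxP [D ->]]; first exact: H.
by rewrite !mxE !big_ord1 H.
Qed.

Definition sqmx n (v : 'rV[algC]_n) : 'M[algC]_n := \matrix_(r < n, l < n) v 0 l.

Lemma sqmxE n (v : 'rV[algC]_n) (i : 'I_n) : (sqmx v :=: v)%MS.
Proof.
have rE r : row r (sqmx v) = v by apply/rowP => l; rewrite !mxE.
apply/eqmxP/andP; split.
  by apply/row_subP => r; rewrite rE.
by rewrite -{1}(rE i) row_sub.
Qed.

Lemma pinning n (E J1 : 'M[algC]_n) (x1 : 'rV[algC]_n) :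
  (x1 :=: J1)%MS -> x1 != 0 -> (J1 <= E)%MS -> special_in E J1 ->
  forall h : 'rV_n, (h <= E)%MS ->
    (forall i j, x1 0 i = x1 0 j -> h 0 i = h 0 j) -> (h <= x1)%MS.
Proof.
move=> ex1 x1n0 J1E sp h hE hx.
case: (classic (exists i j, x1 0 i != x1 0 j)) => [[i [j nij]] | N].
  set v := (h 0 i - h 0 j) *: x1 - (x1 0 i - x1 0 j) *: h.
  have dn0 : x1 0 i - x1 0 j != 0 by rewrite subr_eq0.
  case: (eqVneq v 0) => [v0 | vn0].
    have -> : h = ((h 0 i - h 0 j) / (x1 0 i - x1 0 j)) *: x1.
      apply/rowP => l; move/rowP: v0 => /(_ l); rewrite !mxE => /eqP.
      rewrite subr_eq0 => /eqP e; by rewrite mulrAC e mulrC mulrA mulVf // mul1r.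
    exact: scalemx_sub.
  exfalso.
  have x1E : (x1 <= E)%MS by rewrite ex1.
  have vE : (v <= E)%MS by rewrite addmx_sub ?eqmx_opp ?scalemx_sub.
  have sqE := sqmxE v i.
  have vij : v 0 i = v 0 j by rewrite !mxE; ring.
  have sE : (sqmx v <= E)%MS by rewrite sqE.
  have rk : \rank (sqmx v) = \rank J1.
    by rewrite sqE -ex1 !rank_rV vn0 x1n0.
  have ps : Psub (sqmx v) J1.
    apply/PsubE => a b HJ; have /eqrelP_rV xab := eqrelP_eqmx (eqmx_sym ex1) HJ.
    apply: (eqrelP_eqmx (eqmx_sym sqE)); apply/eqrelP_rV.
    by rewrite !mxE xab (hx _ _ xab).
  have [_ /PsubE H] := sp _ sE rk ps.
  have : eqrelP J1 i j.
    by apply: H; apply: (eqrelP_eqmx (eqmx_sym sqE)); apply/eqrelP_rV.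
  move=> HJ; have /eqrelP_rV e := eqrelP_eqmx (eqmx_sym ex1) HJ.
  by rewrite e eqxx in nij.
have [i0 ni0] : exists i0, x1 0 i0 != 0.
  apply/existsP; apply: contraR x1n0 => /existsPn H.
  by apply/eqP/rowP => l; rewrite mxE; apply/eqP; move: (H l); rewrite negbK.
have -> : h = (h 0 i0 / x1 0 i0) *: x1.
  apply/rowP => l; rewrite !mxE.
  have e : x1 0 l = x1 0 i0.
    by apply: NNPP => ne; apply: N; exists l, i0; apply/eqP.
  by rewrite (hx _ _ e) e mulfVK.
exact: scalemx_sub.
Qed.


Definition Qmx n (x1 : 'rV[algC]_n) : 'M[algC]_(#|{: 'I_n * 'I_n}|, n) :=
  \matrix_(t, l)
     (if x1 0 (enum_val t).1 == x1 0 (enum_val t).2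
      then ((l == (enum_val t).1)%:R - (l == (enum_val t).2)%:R) else 0).

Lemma sum_delta n (y : 'rV[algC]_n) i :
  \sum_(l < n) y 0 l * (l == i)%:R = y 0 i.
Proof.
rewrite (bigD1 i) //= eqxx mulr1 big1 ?addr0 // => l /negbTE ->; by rewrite mulr0.
Qed.

Lemma QmxE n (x1 y : 'rV[algC]_n) t :
  (y *m (Qmx x1)^T) 0 t =
  (if x1 0 (enum_val t).1 == x1 0 (enum_val t).2
   then y 0 (enum_val t).1 - y 0 (enum_val t).2 else 0).
Proof.
rewrite mxE /=; under eq_bigr => l _ do rewrite !mxE.
case: ifP => _; last by rewrite big1 // => l _; rewrite mulr0.
under eq_bigr => l _ do rewrite mulrBr.
by rewrite sumrB !sum_delta.
Qed.

Lemma Qmx_pairs n (x1 y : 'rV[algC]_n) :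
  y *m (Qmx x1)^T = 0 -> forall i j, x1 0 i = x1 0 j -> y 0 i = y 0 j.
Proof.
move=> H i j e; move/rowP: H => /(_ (enum_rank (i, j))).
rewrite QmxE !mxE /= enum_rankK /= e eqxx => /eqP; by rewrite subr_eq0 => /eqP.
Qed.

Lemma Qmx_0 n (x1 y : 'rV[algC]_n) :
  (forall i j, x1 0 i = x1 0 j -> y 0 i = y 0 j) -> y *m (Qmx x1)^T = 0.
Proof.
move=> H; apply/rowP => t; rewrite QmxE mxE.
by case: ifP => // /eqP e; rewrite (H _ _ e) subrr.
Qed.

Lemma rowsub_tr_ent m n p (f : 'I_p -> 'I_m) (Q : 'M[algC]_(m, n)) (y : 'rV_n) s :
  (y *m (rowsub f Q)^T) 0 s = (y *m Q^T) 0 (f s).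
Proof. rewrite !mxE; apply: eq_bigr => l _; by rewrite !mxE. Qed.

Lemma rowsub_tr_0 m n p (f : 'I_p -> 'I_m) (Q : 'M[algC]_(m, n)) (y : 'rV_n) :
  y *m Q^T = 0 -> y *m (rowsub f Q)^T = 0.
Proof. move=> H; apply/rowP => s; by rewrite rowsub_tr_ent H !mxE. Qed.

Lemma select_funcs m n (Q : 'M[algC]_(m, n)) (N : 'M[algC]_n) :
  exists r (f : 'I_r -> 'I_m),
    (forall t : 'rV_r, exists h : 'rV_n, (h <= N)%MS /\ h *m (rowsub f Q)^T = t) /\
    (forall h : 'rV_n, (h <= N)%MS -> h *m (rowsub f Q)^T = 0 -> h *m Q^T = 0).
Proof.
set R := Q *m N^T.
exists (\rank R), (maxrankfun R); split.
  move=> t.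
  have fr := maxrowsub_free R.
  rewrite -mul_rowsub_mx in fr.
  have rf : row_full (N *m (rowsub (maxrankfun R) Q)^T).
    rewrite /row_full -[N *m _](trmxK) trmx_mul trmxK mxrank_tr.
    by move/eqP: fr => ->.
  have /submxP [a ->] := submx_full t rf.
  by exists (a *m N); rewrite submxMl mulmxA.
move=> h /submxP [a ->] H0.
have /submxP [L eL] : (R <= rowsub (maxrankfun R) R)%MS by rewrite eq_maxrowsub.
rewrite -mul_rowsub_mx in eL.
rewrite -mulmxA -[N *m Q^T]trmxK trmx_mul trmxK -/R eL !trmx_mul !mulmxA.
by rewrite trmxK H0 mul0mx.
Qed.


Lemma build n (M : 'M[algC]_n) K r (Qf : 'M[algC]_(r, n)) (x1 : 'rV_n) :
  (forall t : 'rV_r, exists h : 'rV_n,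
      (h <= (kermx M :&: powm M K))%MS /\ h *m Qf^T = t) ->
  (x1 <= powm M K)%MS ->
  exists x : 'rV_n, x *m powm M K = x1 /\
    forall m, (m < K)%N -> x *m powm M m *m Qf^T = 0.
Proof.
move=> surj x1K.
suff: forall s, (s <= K)%N -> exists x : 'rV_n, x *m powm M K = x1 /\
    forall m, (K - s <= m)%N -> (m < K)%N -> x *m powm M m *m Qf^T = 0.
  move=> /(_ K (leqnn K)) [x [xK H]]; exists x; split=> // m; apply: H.
  by rewrite subnn.
elim=> [|s IH] sK.
  have /submxP [w ->] := x1K; exists w; split=> // m; lia.
have [x [xK Hx]] := IH (ltnW sK).
set m0 := (K - s.+1)%N.
have [h [hN hQ]] := surj (- (x *m powm M m0 *m Qf^T)).
move: hN; rewrite sub_capmx => /andP [] /[!sub_kermx] /eqP hM /submxP [w hw].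
exists (x + w *m powm M (K - m0)); split.
  rewrite mulmxDl xK -mulmxA -powmD addnC powmD mulmxA -hw ker_powm ?addr0 //.
  rewrite /m0; lia.
move=> m m0m mK.
rewrite !mulmxDl -(mulmxA w) -powmD.
case: (eqVneq m m0) => [-> | ne].
  have -> : (K - m0 + m0 = K)%N by rewrite /m0; lia.
  by rewrite -hw hQ addrN.
have -> : (K - m0 + m = K + (m - m0))%N by rewrite /m0; lia.
rewrite powmD mulmxA -hw (@ker_powm _ _ _ (m - m0) hM); last by rewrite /m0 in ne m0m *; lia.
rewrite mul0mx addr0; apply: Hx => //; rewrite /m0 in m0m ne; lia.
Qed.


Lemma chain_pow n (M : 'M[algC]_n) K (x x1 : 'rV_n) j s :
  x *m powm M K = x1 -> (j <= K)%N -> (j <= s)%N ->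
  x *m powm M (K - j) *m powm M s = x1 *m powm M (s - j).
Proof.
move=> xK jK js; rewrite -mulmxA -powmD.
have -> : (K - j + s = K + (s - j))%N by lia.
by rewrite powmD mulmxA xK.
Qed.

Lemma chain_free n (M : 'M[algC]_n) K (x x1 : 'rV_n) :
  x *m powm M K = x1 -> x1 != 0 -> x1 *m M = 0 ->
  row_free (\matrix_(j < K.+1) (x *m powm M (K - j))).
Proof.
move=> xK x1n0 x1M; set W0 := \matrix_(j < K.+1) _.
have key : forall a : 'rV_K.+1, a *m W0 = 0 -> a = 0.
  move=> a Ha.
  suff H : forall d (j : 'I_K.+1), (K.+1 - d <= j)%N -> a 0 j = 0.
    by apply/rowP => j; rewrite mxE; apply: (H K.+1); rewrite subnn.
  elim=> [|d IH] j hj; first by have := ltn_ord j; lia.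
  case: (leqP (K.+1 - d) j) => hjd; first exact: IH.
  have : a *m W0 *m powm M j = 0 by rewrite Ha mul0mx.
  rewrite (mulmx_sum_row a W0) mulmx_suml (bigD1 j) //= big1 ?addr0.
    rewrite rowK -scalemxAl (chain_pow xK) // ?subnn ?powm0 ?mulmx1; last by have := ltn_ord j; lia.
    by move/eqP; rewrite scaler_eq0 (negbTE x1n0) orbF => /eqP.
  move=> i ne; rewrite rowK -scalemxAl.
  case: (ltnP j i) => ji.
    by rewrite IH ?scale0r //; lia.
  rewrite (chain_pow xK) //; last by have := ltn_ord i; lia.
  rewrite ker_powm ?scaler0 //.
  have : (i : nat) != j by [].
  lia.
rewrite -kermx_eq0; apply/eqP/row_matrixP => r; rewrite row0.
apply: key; by rewrite -row_mul mulmx_ker row0.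
Qed.

Lemma chain_gen n (M : 'M[algC]_n) K (x x1 : 'rV_n) :
  x *m powm M K = x1 -> x1 *m M = 0 -> (K < n)%N ->
  (\matrix_(j < K.+1) (x *m powm M (K - j)) <= kermx (powm M n))%MS.
Proof.
move=> xK x1M Kn; rewrite sub_kermx; apply/eqP/row_matrixP => r.
rewrite row0 row_mul rowK (chain_pow xK) //; last by have := ltn_ord r; lia.
  by rewrite ker_powm //; have := ltn_ord r; lia.
by have := ltn_ord r; lia.
Qed.

Lemma chain_jordan n (M : 'M[algC]_n) K (x x1 : 'rV_n) :
  x *m powm M K = x1 -> x1 != 0 -> x1 *m M = 0 ->
  [/\ (forall i, (i < K.+1)%N -> x *m powm M (K - i) != 0),
      x *m powm M (K - 0) *m M = 0 &
      (forall i, (i.+1 < K.+1)%N ->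
         x *m powm M (K - i.+1) *m M = x *m powm M (K - i))].
Proof.
move=> xK x1n0 x1M; split.
- move=> i iK; apply: contraNneq x1n0 => e.
  have iK' : (i <= K)%N by lia.
  have h := chain_pow xK iK' (leqnn i).
  by rewrite e mul0mx subnn powm0 mulmx1 in h; rewrite -h.
- by rewrite subn0 xK.
- move=> i iK.
  by rewrite -mulmxA -[X in _ *m (_ *m X)]powm1 -powmD; congr (_ *m powm _ _); lia.
Qed.


Lemma Qf_pair n (x1 y : 'rV[algC]_n) r (f : 'I_r -> 'I_#|{: 'I_n * 'I_n}|) s :
  y *m (rowsub f (Qmx x1))^T = 0 ->
  x1 0 (enum_val (f s)).1 = x1 0 (enum_val (f s)).2 ->
  y 0 (enum_val (f s)).1 = y 0 (enum_val (f s)).2.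
Proof.
move=> /rowP /(_ s); rewrite rowsub_tr_ent QmxE mxE => + e; rewrite e eqxx.
by move/eqP; rewrite subr_eq0 => /eqP.
Qed.

Lemma chain_head n (M : 'M[algC]_n) k (u : nat -> 'rV_n) K :
  (forall i, (i.+1 < k)%N -> u i.+1 *m M = u i) -> (K < k)%N ->
  u 0%N = u K *m powm M K.
Proof.
move=> Hc Kk.
suff H : forall d, (d <= K)%N -> u (K - d)%N = u K *m powm M d.
  by rewrite -(H K) ?subnn.
elim=> [|d IH] dK; first by rewrite subn0 powm0 mulmx1.
rewrite powmS mulmxA -IH; last by lia.
rewrite -Hc; last by lia.
by congr (u _ *m _); lia.
Qed.

Definition cnt n (U : 'M[algC]_n) := #|[set p : 'I_n * 'I_n | eqrelb U p.1 p.2]|.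

Unset Implicit Arguments.
Theorem mainTheorem5 (n : nat) (A : 'M[nat]_n) (lam : algC) :
  regular_network A ->
  eigenvalue (Amx A) lam ->
  (1 <= \rank (Gsp A lam))%N ->
  forall k : nat, (1 <= k)%N -> (k <= \rank (Gsp A lam))%N ->
  forall J1 : 'M[algC]_n,
    \rank J1 = 1%N -> (J1 <= Nsp A lam k)%MS -> special_in (Nsp A lam k) J1 ->
  exists W : 'M[algC]_n,
    [/\ special_jordan A lam W, \rank W = k, (W <= Gsp A lam)%MS & (J1 <= W)%MS].
Proof.
move=> _ _ _ k k1 kG J1 rkJ1 J1N sp.
set M := Bt A lam.
set K := k.-1.
have kK : k = K.+1 by rewrite /K; lia.
have kn : (k <= n)%N by apply: leq_trans kG (rank_leq_col _).
have NE : Nsp A lam k = (kermx M :&: powm M K)%MS by [].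
have [r0 xr0] : exists r0, row r0 J1 != 0.
  apply: NNPP => N; move: rkJ1; have -> : J1 = 0.
    apply/row_matrixP => r; rewrite row0; apply: NNPP => ne; apply: N; exists r.
    by apply/negP => /eqP.
  by rewrite mxrank0.
set x1 := row r0 J1.
have ex1 : (x1 :=: J1)%MS.
  by apply/eqmxP; rewrite -(mxrank_leqif_eq (row_sub r0 J1)).2 rank_rV xr0 rkJ1.
have x1N : (x1 <= Nsp A lam k)%MS by rewrite ex1.
have x1M : x1 *m M = 0.
  by move: x1N; rewrite NE sub_capmx sub_kermx => /andP [/eqP].
have x1K : (x1 <= powm M K)%MS by move: x1N; rewrite NE sub_capmx => /andP [].
have pin := pinning ex1 xr0 J1N sp.
have [r [f [surj transf]]] := select_funcs (Qmx x1) (Nsp A lam k).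
set Qf := rowsub f (Qmx x1).
have [x [xK Hx]] := build (surj : forall t, exists h, (h <= kermx M :&: powm M K)%MS /\ _) x1K.
set c := fun j : nat => x *m powm M (K - j).
set W0m := \matrix_(j < K.+1) c j.
set W0 : 'M_n := <<W0m>>%MS.
have W0E : (W0 :=: W0m)%MS by apply: genmxE.
have x1M' : x1 *m Bt A lam = 0 by [].
have jW0 : jordan_subspace A lam W0.
  split.
    rewrite W0E; apply: (chain_gen xK x1M); lia.
  exists K.+1, c; split; last by apply/eqmxP.
  have [H1 H2 H3] := chain_jordan xK xr0 x1M.
  by split.
have rkW0 : \rank W0 = k.
  by rewrite W0E kK; apply/eqP; apply: (chain_free xK xr0 x1M).
have c0 : c 0%N = x1 by rewrite /c subn0 xK.
have J1W0 : (J1 <= W0)%MS.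
  rewrite -ex1 W0E -c0.
  have -> : c 0%N = row ord0 W0m by rewrite rowK.
  exact: row_sub.
have cQ : forall t : 'I_K.+1, c t *m Qf^T = 0.
  move=> t; case: (posnP t) => [t0 | tpos].
    rewrite t0 c0; apply: rowsub_tr_0; exact: Qmx_0.
  rewrite /c; apply: Hx; have := ltn_ord t; lia.
have pinW0 : forall h : 'rV_n, (h <= Nsp A lam k)%MS -> Pset W0 h -> (h <= J1)%MS.
  move=> h hN /PsetE hP.
  rewrite -ex1; apply: pin => // i j e.
  apply: (Qmx_pairs (x1 := x1)) e; apply: transf => //.
  apply/rowP => s; rewrite rowsub_tr_ent QmxE [RHS]mxE.
  case: ifP => // /eqP e'.
  have hij : h 0 (enum_val (f s)).1 = h 0 (enum_val (f s)).2.
    apply: hP.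
    refine (eqrelP_eqmx (eqmx_sym W0E) _); apply/eqrelbP/forallP => t.
    have rE a : W0m t a = c t 0 a by rewrite mxE.
    rewrite !rE; apply/eqP; exact: (Qf_pair (cQ t) e').
  by rewrite hij subrr.
pose Fam (U : 'M[algC]_n) :=
  [/\ jordan_subspace A lam U, \rank U = k, (J1 <= U)%MS & Psub U W0].
have FW0 : Fam W0 by split.
have [W [[jW rkW J1W PWW0] Wmax]] :=
  ex_max_measure (c := @cnt n) (b := #|{: 'I_n * 'I_n}|) (ex_intro _ W0 FW0)
    (fun U _ => max_card _).
exists W; split => //; last by case: jW.
split => // U jU rkU PUW; left.
have PUW0 : Psub U W0 by move=> y /PUW /PWW0.
have J1U : (J1 <= U)%MS.
  case: jU => UG [k' [u [[Hu1 Hu2 Hu3] eU]]].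
  have kk' : (k <= k')%N.
    by rewrite -rkW -rkU (eqmxP eU); apply: rank_leq_row.
  have u0U : (u 0%N <= U)%MS.
    have k'0 : (0 < k')%N by lia.
    rewrite (eqmxP eU) -(rowK (fun i : 'I_k' => u i) (Ordinal k'0)).
    exact: row_sub.
  have u0N : (u 0%N <= Nsp A lam k)%MS.
    rewrite NE sub_capmx sub_kermx Hu2 eqxx /=.
    rewrite (chain_head Hu3 (K:=K)); [exact: submxMl | lia].
  have u0P : Pset W0 (u 0%N).
    apply: PUW0; apply/PsetE => i j; exact.
  have u0J : (u 0%N <= J1)%MS by apply: pinW0.
  have : (u 0%N == J1)%MS.
    by rewrite -(mxrank_leqif_eq u0J).2 rank_rV Hu1 ?rkJ1 //; lia.
  move/eqmxP => e; by rewrite -e.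
have FU : Fam U by split => //; rewrite rkU.
have cUW := Wmax _ FU.
have sub : [set p : 'I_n * 'I_n | eqrelb W p.1 p.2] \subset
           [set p : 'I_n * 'I_n | eqrelb U p.1 p.2].
  apply/subsetP => p; rewrite !inE => /eqrelbP H; apply/eqrelbP.
  by move/PsubE: PUW; apply.
have eqs : [set p : 'I_n * 'I_n | eqrelb W p.1 p.2] ==
           [set p : 'I_n * 'I_n | eqrelb U p.1 p.2].
  by rewrite -(subset_leqif_cards sub).2 eqn_leq cUW (subset_leqif_cards sub).1.
split => //; apply/PsubE => i j /eqrelbP H; apply/eqrelbP.
have : (i, j) \in [set p : 'I_n * 'I_n | eqrelb U p.1 p.2] by rewrite inE.
by rewrite -(eqP eqs) inE.
Qed.
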